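(* Let $b\ge2$ be an integer. (1) For any nonempty subset $S$ of $\mathbb{Z}$, the $b$-exponent sequence $(\alpha_k(S,b))_{k=0}^\infty$ is weakly increasing: $\alpha_{k+1}(S,b)\ge\alpha_k(S,b)$ for all $k\ge0$. (2) For any nonempty subset $S$ of $\mathbb{Z}$ and any nonnegative integers $k,\ell$, $\alpha_{k+\ell}(S,b)\ge\alpha_k(S,b)+\alpha_\ell(S,b)$. (3) If $S_1\subseteq S_2\subseteq\mathbb{Z}$ with $S_1$ nonempty, then $\alpha_k(S_1,b)\ge\alpha_k(S_2,b)$ for every $k\ge0$.
   Context: For $b\ge2$ and $a\in\mathbb{Z}$, $\operatorname{ord}_b(a)$ is the largest $k\in\mathbb{N}$ with $b^k\mid a$ ($+\infty$ for $a=0$). For nonempty $S\subseteq\mathbb{Z}$, a $b$-ordering of $S$ is a sequence $(a_i)_{i\ge0}$ in $S$ such that for each $i\ge1$, $a_i$ attains $\min_{a'\in S}\sum_{j=0}^{i-1}\operatorname{ord}_b(a'-a_j)$; the $b$-exponent sequence of $S$ is $\alpha_k(S,b):=\sum_{j=0}^{k-1}\operatorname{ord}_b(a_k-a_j)$ for any $b$-ordering (independent of the choice). *)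

(* Defs.v *)
From mathcomp Require Import all_boot all_order all_algebra.
Set Implicit Arguments. Unset Strict Implicit. Unset Printing Implicit Defensive.
Import Order.TTheory GRing.Theory Num.Theory.

Inductive enat := Fin of nat | Inf.

Definition eadd (x y : enat) : enat :=
  match x, y with Fin m, Fin n => Fin (m + n) | _, _ => Inf end.

Definition ele (x y : enat) : bool :=
  match x, y with
  | _, Inf => true
  | Inf, Fin _ => false
  | Fin m, Fin n => (m <= n)%N
  end.

(* ord_b(a): the largest k with b^k | a, and +oo for a = 0.
   For a <> 0 any such k satisfies k <= |a| (since b >= 2), so the
   maximum over k < |a|+1 is the largest such k. *)
Definition ord_b (b : nat) (a : int) : enat :=
  if a == 0%R then Inf
  else Fin (\max_(k < `|a|%N.+1 | (b ^ k %| `|a|%N)%N) (k : nat)).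

Fixpoint psum (b : nat) (x : int) (a : nat -> int) (i : nat) : enat :=
  match i with
  | 0 => Fin 0
  | i'.+1 => eadd (psum b x a i') (ord_b b (x - a i')%R)
  end.

Definition is_b_ordering (b : nat) (S : int -> Prop) (a : nat -> int) : Prop :=
  (forall i, S (a i)) /\
  (forall i, (1 <= i)%N -> forall a', S a' -> ele (psum b (a i) a i) (psum b a' a i)).

(* alpha_k(S,b) computed from the b-ordering a of S. *)
Definition alpha_of (b : nat) (a : nat -> int) (k : nat) : enat := psum b (a k) a k.

(* Main.v *)
Require Import Defs.
From mathcomp Require Import all_boot all_order all_algebra.
From mathcomp Require Import zify ring.
Set Implicit Arguments. Unset Strict Implicit. Unset Printing Implicit Defensive.
Import Order.TTheory GRing.Theory Num.Theory.

Lemma ele_refl x : ele x x. Proof. by case: x => //= n. Qed.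
Lemma ele_trans x y z : ele x y -> ele y z -> ele x z.
Proof. case: x; case: y; case: z => //= *; lia. Qed.
Lemma eaddC x y : eadd x y = eadd y x.
Proof. by case: x; case: y => //= *; rewrite addnC. Qed.
Lemma eaddA x y z : eadd x (eadd y z) = eadd (eadd x y) z.
Proof. by case: x; case: y; case: z => //= *; rewrite addnA. Qed.
Lemma eadd0 x : eadd (Fin 0) x = x. Proof. by case: x. Qed.
Lemma ele_add x x' y y' : ele x x' -> ele y y' -> ele (eadd x y) (eadd x' y').
Proof. case: x; case: x'; case: y; case: y' => //= *; lia. Qed.
Lemma ele0 x : ele (Fin 0) x. Proof. by case: x. Qed.
Lemma ele_addr x y : ele x (eadd x y).
Proof. case: x; case: y => //= *; lia. Qed.
Lemma ele_cancel m u v : ele (eadd (Fin m) u) (eadd (Fin m) v) -> ele u v.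
Proof. case: u; case: v => //= *; lia. Qed.

Section Ord.
Variable b : nat.
Hypothesis hb : (2 <= b)%N.

Lemma ord_char (a : int) n : a != 0%R -> (b ^ n %| `|a|)%N -> ~~ (b ^ n.+1 %| `|a|)%N ->
  ord_b b a = Fin n.
Proof.
move=> a0 d1 d2; rewrite /ord_b (negbTE a0); congr Fin.
have apos : (0 < `|a|)%N by rewrite absz_gt0.
have nlt : (n < `|a|.+1)%N.
  rewrite ltnS; apply: leq_trans (dvdn_leq apos d1); apply: ltnW; exact: ltn_expl.
apply/eqP; rewrite eqn_leq; apply/andP; split.
  apply/bigmax_leqP => k dk; rewrite leqNgt; apply/negP => lt.
  by move/negP: d2; apply; apply: dvdn_trans dk; apply: dvdn_exp2l.
exact: (@leq_bigmax_cond _ (fun k : 'I_(`|a|.+1) => (b ^ k %| `|a|)%N) (fun k => nat_of_ord k) (Ordinal nlt)).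
Qed.

Lemma ord_spec (a : int) : a != 0%R -> exists n, ord_b b a = Fin n /\ (b ^ n %| `|a|)%N /\ ~~ (b ^ n.+1 %| `|a|)%N.
Proof.
move=> a0.
have P0 : (b ^ (@ord0 `|a|) %| `|a|)%N by rewrite expn0 dvd1n.
have := @bigop.bigmax_eq_arg _ ord0 (fun k : 'I_(`|a|.+1) => (b ^ k %| `|a|)%N) (fun k => nat_of_ord k) P0.
set i := [arg max_(_ > _ | _) _] => e.
have : (b ^ i %| `|a|)%N by rewrite /i; case: arg_maxnP.
move=> di; exists i; split; first by rewrite /ord_b (negbTE a0) e.
split => //; apply/negP => d2.
have apos : (0 < `|a|)%N by rewrite absz_gt0.
have nlt : (i.+1 < `|a|.+1)%N.
  rewrite ltnS; apply: leq_trans (dvdn_leq apos d2); apply: ltnW; exact: ltn_expl.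
have := @leq_bigmax_cond _ (fun k : 'I_(`|a|.+1) => (b ^ k %| `|a|)%N) (fun k => nat_of_ord k) (Ordinal nlt) d2.
by rewrite e /= ltnn.
Qed.

Lemma ord_mulb (z : int) : ord_b b (z * b%:Z)%R = eadd (Fin 1) (ord_b b z).
Proof.
have b0 : (0 < b)%N by apply: leq_trans hb.
have [->|z0] := eqVneq z 0%R; first by rewrite mul0r /ord_b eqxx.
have [n [-> [d1 d2]]] := ord_spec z0.
have zb0 : (z * b%:Z)%R != 0%R by rewrite mulf_neq0 // eqz_nat -lt0n.
rewrite /= (ord_char (n := n.+1) zb0) //.
  by rewrite abszM /= expnS mulnC dvdn_pmul2r.
by rewrite abszM /= expnS mulnC dvdn_pmul2r.
Qed.

Lemma ord_ndvd (z : int) : ~~ (b %| `|z|)%N -> ord_b b z = Fin 0.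
Proof.
move=> nd; have z0 : z != 0%R by apply: contraNneq nd => ->; rewrite dvdn0.
by apply: ord_char => //; rewrite ?expn0 ?dvd1n ?expn1.
Qed.
End Ord.

Section Main.
Variable b : nat.
Hypothesis hb : (2 <= b)%N.
Local Open Scope ring_scope.

Fixpoint Pc (x : int) (R : seq int) : enat :=
  match R with [::] => Fin 0 | y :: R' => eadd (Pc x R') (ord_b b (x - y)) end.

Fixpoint pre (a : nat -> int) (k : nat) : seq int :=
  match k with 0 => [::] | k'.+1 => a k' :: pre a k' end.

Lemma psum_pre x a k : psum b x a k = Pc x (pre a k).
Proof. by elim: k => //= k ->. Qed.

Lemma Pc_cat x R1 R2 : Pc x (R1 ++ R2) = eadd (Pc x R1) (Pc x R2).
Proof.
elim: R1 => [|y R1 IH] /=; first by case: (Pc x R2).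
by rewrite IH -!eaddA (eaddC (Pc x R2)).
Qed.

Definition q (y : int) : int := (y %/ b)%Z.

Lemma bz0 : (b%:Z != 0).
Proof. by rewrite eqz_nat; case: b hb. Qed.

Lemma decomp x r Y : (x %% b)%Z = r ->
  Pc x Y = eadd (Fin (count (fun y => (y %% b)%Z == r) Y))
                (Pc (q x) (map q (filter (fun y => (y %% b)%Z == r) Y))).
Proof.
move=> xr; elim: Y => [|y Y IH] /=; first by [].
case: ifP => hy /=.
  have -> : x - y = (q x - q y) * b%:Z.
    rewrite {1}(divz_eq x b) {1}(divz_eq y b) xr (eqP hy) /q; ring.
  rewrite ord_mulb // IH.
  case: (Pc _ _) => [n|] //=; case: (ord_b _ _) => [m|] //=; congr Fin; lia.
rewrite IH (@ord_ndvd b hb); first by case: (Pc _ _) => [n|] //=; rewrite addn0.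
have : ~~ ((x == y %[mod b%:Z])%Z) by rewrite xr eq_sym hy.
by rewrite eqz_mod_dvd dvdzE.
Qed.

Definition T (S : int -> Prop) (r : int) : int -> Prop := fun x' => S (x' * b%:Z + r).

Lemma mod_lin x' r : 0 <= r < b%:Z -> ((x' * b%:Z + r) %% b)%Z = r.
Proof.
move=> hr; have := modzMDl x' r b%:Z; rewrite /= => ->; exact: modz_small.
Qed.

Lemma div_lin x' r : 0 <= r < b%:Z -> q (x' * b%:Z + r) = x'.
Proof.
move=> hr; rewrite /q divzMDl ?bz0 // divz_small ?addr0 //.
Qed.

Lemma q_lin y r : (y %% b)%Z = r -> q y * b%:Z + r = y.
Proof. by move=> <-; rewrite /q -divz_eq. Qed.

Lemma res_range y : 0 <= (y %% b)%Z < b%:Z.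
Proof. by rewrite modz_ge0 ?bz0 // ltz_pmod // ltz_nat; case: b hb. Qed.

Lemma min_restrict S L y r : (y %% b)%Z = r ->
  (forall x, S x -> ele (Pc y L) (Pc x L)) ->
  forall x', T S r x' ->
  ele (Pc (q y) (map q (filter (fun z => (z %% b)%Z == r) L)))
      (Pc x' (map q (filter (fun z => (z %% b)%Z == r) L))).
Proof.
move=> yr hmin x' Tx; have rr : 0 <= r < b%:Z by rewrite -yr res_range.
have := hmin _ Tx.
rewrite (decomp L yr) (decomp L (mod_lin x' rr)) div_lin //.
exact: ele_cancel.
Qed.

Fixpoint greedy (S : int -> Prop) (R : seq int) : Prop :=
  match R with
  | [::] => True
  | y :: R' => greedy S R' /\ S y /\ forall x, S x -> ele (Pc y R') (Pc x R')
  end.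

Lemma greedy_restrict S r R : 0 <= r < b%:Z -> greedy S R ->
  greedy (T S r) (map q (filter (fun z => (z %% b)%Z == r) R)).
Proof.
move=> rr; elim: R => [|y R IH] //= [gR [Sy my]].
case: ifP => hy //=; last exact: IH.
split; first exact: IH.
split; first by rewrite /T (q_lin (eqP hy)).
exact: min_restrict (eqP hy) my.
Qed.

Lemma greedy_suffix S R2 L : greedy S (R2 ++ L) -> greedy S L.
Proof. by elim: R2 => //= y R2 IH [/IH]. Qed.

Lemma pick (P : pred int) m R : (m < count P R)%N ->
  exists R2 y R1, R = R2 ++ y :: R1 /\ P y /\ (m <= count P R1)%N.
Proof.
elim: R => [|y R IH] //=.
case Py: (P y) => /=.
  case: (leqP m (count P R)) => h.
    by move=> _; exists [::], y, R.
  rewrite add1n ltnS => h'; lia.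
rewrite add0n => /IH [R2 [z [R1 [-> [Pz c]]]]].
by exists (y :: R2), z, R1.
Qed.

Definition cnt (r : 'I_b) (L : seq int) := count (fun y => (y %% b)%Z == (r : nat)%:Z) L.

Lemma res_ord y : exists r : 'I_b, (y %% b)%Z = (r : nat)%:Z.
Proof.
have /andP [h1 h2] := res_range y.
have hn : (`|(y %% b)%Z| < b)%N by rewrite -ltz_nat gez0_abs.
by exists (Ordinal hn) => /=; rewrite gez0_abs.
Qed.

Lemma sum_cnt L : (\sum_(r < b) cnt r L)%N = size L.
Proof.
elim: L => [|y L IH] /=; first by rewrite big1.
rewrite /cnt /=; under eq_bigr do rewrite /= .
rewrite big_split /= -/(cnt _ _) .
have -> : (\sum_(i < b) count (fun y0 => (y0 %% b)%Z == (i:nat)%:Z) L)%N = size L by [].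
have [r0 hr0] := res_ord y.
rewrite (bigD1 r0) //= hr0 eqxx big1 ?add1n ?addn0 //.
move=> i ne; rewrite eqz_nat eq_sym.
by move: ne; rewrite -val_eqE /= => /negbTE ->.
Qed.


Lemma ele_addl x y : ele y (eadd x y).
Proof. rewrite eaddC; exact: ele_addr. Qed.

Lemma U N : forall S R x0 Y, greedy S R -> S x0 ->
  (forall x, S x -> ele (Pc x0 R) (Pc x R)) -> (size Y <= size R)%N ->
  (forall n, Pc x0 R = Fin n -> (n + size R <= N)%N) ->
  exists x, S x /\ ele (Pc x Y) (Pc x0 R).
Proof.
elim: N => [|N IH] S R x0 Y gR Sx0 mx0 szY meas.
  case E: (Pc x0 R) => [n|]; last by exists x0; split => //; case: (Pc x0 Y).
  have := meas _ E; case: Y szY => [|y Y] /= szY hm.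
    by exists x0; split => //; exact: ele0.
  lia.
case E: (Pc x0 R) => [n|]; last by exists x0; split => //; case: (Pc x0 Y).
have hm := meas _ E.
have [Y0|Yne] := eqVneq Y [::].
  by exists x0; split => //; rewrite Y0; exact: ele0.
have szY1 : (0 < size Y)%N by case: Y Yne {szY meas} => [|? ?].
rewrite -E.
case: (boolP [exists r : 'I_b, (cnt r Y < cnt r R)%N]).
  case/existsP => r lt.
  have [R2 [y [R1 [eR [Py c]]]]] := pick lt.
  have rr : 0 <= (r:nat)%:Z < b%:Z by rewrite ltz_nat ltn_ord.
  have gy : greedy S (y :: R1) by apply: (@greedy_suffix _ R2); rewrite -eR.
  case: gy => [gR1 [Sy my]].
  have ey := decomp R1 (eqP Py).
  have le1 : ele (Pc y R1) (Pc x0 R).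
    apply: ele_trans (my _ Sx0) _.
    rewrite eR Pc_cat /=; apply: ele_trans (ele_addl (Pc x0 R2) _).
    exact: ele_addr.
  have Tqy : T S (r:nat)%:Z (q y) by rewrite /T q_lin //; apply/eqP.
  have Hsz : (size (map q (filter (fun z => (z %% b)%Z == (r:nat)%:Z) Y)) <= size (map q (filter (fun z => (z %% b)%Z == (r:nat)%:Z) R1)))%N.
    rewrite !size_map !size_filter; move: c; rewrite /cnt; lia.
  have Hm : forall n', Pc (q y) (map q (filter (fun z => (z %% b)%Z == (r:nat)%:Z) R1)) = Fin n' ->
     (n' + size (map q (filter (fun z => (z %% b)%Z == (r:nat)%:Z) R1)) <= N)%N.
    move=> n' E'; move: le1; rewrite ey E' E /= size_map size_filter.
    lia.
  have [x' [Tx' hx']] := IH (T S (r:nat)%:Z) _ (q y) (map q (filter (fun z => (z %% b)%Z == (r:nat)%:Z) Y))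
     (greedy_restrict rr gR1) Tqy (min_restrict (eqP Py) my) Hsz Hm.
  exists (x' * b%:Z + (r:nat)%:Z); split; first exact: Tx'.
  rewrite (decomp Y (mod_lin x' rr)) div_lin //.
  apply: ele_trans le1; rewrite ey; apply: ele_add hx'.
  by move: c; rewrite /cnt /=.
rewrite negb_exists => /forallP hall.
have [r0 hr0] := res_ord x0.
have c0 : (cnt r0 Y <= cnt r0 R)%N.
  rewrite leqNgt; apply/negP => gt.
  have := sum_cnt Y; have := sum_cnt R.
  rewrite (bigD1 r0) //= (bigD1 r0 (F := fun r => cnt r Y)) //=.
  have : (\sum_(i < b | i != r0) cnt i R <= \sum_(i < b | i != r0) cnt i Y)%N.
    by apply: leq_sum => i _; rewrite leqNgt (negbTE (hall i)).
  move=> h1 h2 h3; have := leq_add gt h1; rewrite addSn h2 h3; lia.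
have rr : 0 <= (r0:nat)%:Z < b%:Z by rewrite ltz_nat ltn_ord.
have ex0 := decomp R hr0.
have Tqx : T S (r0:nat)%:Z (q x0) by rewrite /T q_lin.
have Hsz : (size (map q (filter (fun z => (z %% b)%Z == (r0:nat)%:Z) Y)) <= size (map q (filter (fun z => (z %% b)%Z == (r0:nat)%:Z) R)))%N.
  rewrite !size_map !size_filter; move: c0; rewrite /cnt; lia.
have Hm : forall n', Pc (q x0) (map q (filter (fun z => (z %% b)%Z == (r0:nat)%:Z) R)) = Fin n' ->
     (n' + size (map q (filter (fun z => (z %% b)%Z == (r0:nat)%:Z) R)) <= N)%N.
  move=> n' E'; move: E; rewrite ex0 E' /= size_map size_filter => -[En].
  have : (count (fun z => (z %% b)%Z == (r0:nat)%:Z) R <= size R)%N by apply: count_size.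
  lia.
have [x' [Tx' hx']] := IH (T S (r0:nat)%:Z) _ (q x0) (map q (filter (fun z => (z %% b)%Z == (r0:nat)%:Z) Y))
     (greedy_restrict rr gR) Tqx (min_restrict hr0 mx0) Hsz Hm.
exists (x' * b%:Z + (r0:nat)%:Z); split; first exact: Tx'.
rewrite (decomp Y (mod_lin x' rr)) div_lin // ex0.
apply: ele_add hx'.
by move: c0; rewrite /cnt /=.
Qed.

Lemma U' S R x0 Y : greedy S R -> S x0 ->
  (forall x, S x -> ele (Pc x0 R) (Pc x R)) -> (size Y <= size R)%N ->
  exists x, S x /\ ele (Pc x Y) (Pc x0 R).
Proof.
move=> gR Sx0 mx0 szY.
case E: (Pc x0 R) => [n|]; last by exists x0; split => //; case: (Pc x0 Y).
rewrite -E; apply: (@U (n + size R)) => // n' E'; move: E'; rewrite E => -[->]; done.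
Qed.

Lemma size_pre a k : size (pre a k) = k.
Proof. by elim: k => //= k ->. Qed.

Lemma greedy_pre S a : is_b_ordering b S a -> forall k, greedy S (pre a k).
Proof.
case=> hS hmin; elim=> [|k IH] //=; split => //; split => // x Sx.
case: k {IH} => [|k]; first exact: ele0.
by have := hmin k.+1 isT x Sx; rewrite !psum_pre.
Qed.

Lemma min_pre S a k : is_b_ordering b S a ->
  forall x, S x -> ele (Pc (a k) (pre a k)) (Pc x (pre a k)).
Proof. by move=> H; have [_ []] := greedy_pre H k.+1. Qed.

End Main.

Theorem proposition5p4 (b : nat) (hb : (2 <= b)%N) :
  (forall (S : int -> Prop) (a : nat -> int),
      (exists x, S x) -> is_b_ordering b S a ->
      forall k : nat, ele (alpha_of b a k) (alpha_of b a k.+1)) /\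
  (forall (S : int -> Prop) (a : nat -> int),
      (exists x, S x) -> is_b_ordering b S a ->
      forall k l : nat,
        ele (eadd (alpha_of b a k) (alpha_of b a l)) (alpha_of b a (k + l))) /\
  (forall (S1 S2 : int -> Prop) (a1 a2 : nat -> int),
      (exists x, S1 x) -> (forall x, S1 x -> S2 x) ->
      is_b_ordering b S1 a1 -> is_b_ordering b S2 a2 ->
      forall k : nat, ele (alpha_of b a2 k) (alpha_of b a1 k)).
Proof.
rewrite /alpha_of; split; [|split].
- move=> S a _ H k; rewrite !psum_pre.
  apply: ele_trans (min_pre k H (proj1 H k.+1)) _ => /=.
  exact: ele_addr.
- move=> S a _ H k l; rewrite !psum_pre.
  have sz : (size (pre a k ++ pre a l) <= size (pre a (k + l)))%N by rewrite size_cat !size_pre.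
  have [x [Sx hx]] := U' hb (greedy_pre H (k + l)) (proj1 H (k + l))
     (min_pre (k + l) H) sz.
  apply: ele_trans hx; rewrite Pc_cat.
  exact: (ele_add (min_pre k H Sx) (min_pre l H Sx)).
- move=> S1 S2 a1 a2 _ sub H1 H2 k; rewrite !psum_pre.
  have sz : (size (pre a2 k) <= size (pre a1 k))%N by rewrite !size_pre.
  have [x [Sx hx]] := U' hb (greedy_pre H1 k) (proj1 H1 k)
     (min_pre k H1) sz.
  apply: ele_trans hx; exact: (min_pre k H2 (sub _ Sx)).
Qed.
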